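(* Let $P$ be a Poisson tensor on $\mathbb{R}^3$, let $H\in C^\infty(\mathbb{R}^3)$, let $S\in C^\infty(\mathbb{R}^3)$ satisfy $PdS=0$, and let $g$ be the symmetric tensor with components $g^{ij}=H^iH^j-\delta^{ij}\sum_k H^kH^k$. Then the system $\dot{x}=PdH+gdS$ and the Hamiltonian system $\dot{x}=PdH$ have the same regular equilibria, i.e. for every point $x$ with $P(x)\neq 0$, $x$ is an equilibrium of one system if and only if it is an equilibrium of the other.
   Context: $\mathbb{R}^3$ carries the standard Euclidean metric, used to identify tangent and cotangent spaces with $\mathbb{R}^3$; $H^i=H_i=\partial H/\partial x^i$. A Poisson tensor is a skew-symmetric bivector field satisfying the Jacobi identity. A regular equilibrium is an equilibrium point $x$ with $P(x)\neq 0$. *)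

(* Defs.v *)
From HB Require Import structures.
From mathcomp Require Import all_boot all_order all_algebra.
From mathcomp Require Import all_classical all_reals all_analysis.
Set Implicit Arguments. Unset Strict Implicit. Unset Printing Implicit Defensive.
Import Order.TTheory GRing.Theory Num.Theory.
Import numFieldNormedType.Exports.
Local Open Scope ring_scope.

Section Defs.
Variable R : realType.
Notation V := 'rV[R]_3.

Definition evec (i : 'I_3) : V := delta_mx 0 i.

Definition partial (i : 'I_3) (f : V -> R) : V -> R :=
  fun x => 'D_(evec i) f x.

Definition smooth (f : V -> R) : Prop :=
  forall (l : seq 'I_3) (x : V), differentiable (foldr partial f l) x.

(* gradient dH = (H_1, H_2, H_3), identified with a vector via the Euclidean metric *)
Definition grad (f : V -> R) (x : V) : V := \row_j partial j f x.

(* contraction of a (2,0)-tensor with a covector: (M v)^i = sum_j M^{ij} v_j *)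
Definition tapply (M : 'M[R]_3) (v : V) : V := \row_i \sum_j M i j * v 0 j.

Definition poisson_tensor (P : V -> 'M[R]_3) : Prop :=
  [/\ forall i j, smooth (fun x => P x i j),
      forall x i j, P x i j = - P x j i &
      forall x i j k,
        \sum_l (P x i l * partial l (fun y => P y j k) x
              + P x j l * partial l (fun y => P y k i) x
              + P x k l * partial l (fun y => P y i j) x) = 0].

Definition gtensor (H : V -> R) (x : V) : 'M[R]_3 :=
  \matrix_(i, j) (grad H x 0 i * grad H x 0 j
                  - (i == j)%:R * \sum_k (grad H x 0 k * grad H x 0 k)).

Definition ham_field (P : V -> 'M[R]_3) (H : V -> R) (x : V) : V :=
  tapply (P x) (grad H x).
Definition metriplectic_field (P : V -> 'M[R]_3) (H S : V -> R) (x : V) : V :=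
  tapply (P x) (grad H x) + tapply (gtensor H x) (grad S x).

Definition equilibrium (F : V -> V) (x : V) : Prop := F x = 0.

End Defs.

(* Main.v *)
Require Import Defs.
From HB Require Import structures.
From mathcomp Require Import all_boot all_order all_algebra.
From mathcomp Require Import all_classical all_reals all_analysis.
From mathcomp Require Import ring lra.
Import Order.TTheory GRing.Theory Num.Theory.
Local Open Scope ring_scope.

Definition o0 : 'I_3 := @Ordinal 3 0 isT.
Definition o1 : 'I_3 := @Ordinal 3 1 isT.
Definition o2 : 'I_3 := @Ordinal 3 2 isT.

Lemma sum3 (R : realType) (F : 'I_3 -> R) : \sum_(j < 3) F j = F o0 + F o1 + F o2.
Proof.
rewrite !big_ord_recl big_ord0 addr0 addrA.
by congr (F _ + F _ + F _); apply/val_inj.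
Qed.

Lemma ord3P (i : 'I_3) : i = o0 \/ i = o1 \/ i = o2.
Proof.
case: i => [[|[|[|n]]] Hn]; [left|right;left|right;right|by []]; exact/val_inj.
Qed.



Lemma dir2 (R : realFieldType) (a b c h0 h1 h2 s0 s1 s2 : R) :
 ~ (a = 0 /\ b = 0 /\ c = 0) ->
 a*h1 + b*h2 = 0 -> -a*h0 + c*h2 = 0 -> -b*h0 - c*h1 = 0 ->
 a*s1 + b*s2 = 0 -> -a*s0 + c*s2 = 0 -> -b*s0 - c*s1 = 0 ->
 h0*(h0*s0+h1*s1+h2*s2) - (h0*h0+h1*h1+h2*h2)*s0 = 0 /\
 h1*(h0*s0+h1*s1+h2*s2) - (h0*h0+h1*h1+h2*h2)*s1 = 0 /\
 h2*(h0*s0+h1*s1+h2*s2) - (h0*h0+h1*h1+h2*h2)*s2 = 0.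
Proof.
move=> nz W0 W1 W2 P0 P1 P2.
have sol : forall (x y u : R), x != 0 -> x * y + u = 0 -> y = - u / x.
  move=> x y u xn e.
  have -> : u = -(x*y) by apply/eqP; rewrite -addr_eq0 addrC e.
  by field.
case: (eqVneq a 0) => [ea|an].
  case: (eqVneq b 0) => [eb|bn].
    case: (eqVneq c 0) => [ec|cn]; first by exfalso; apply: nz.
    have e1 : h1 = - (b*h0) / c by apply: sol cn _; lra.
    have e2 : h2 = - (-a*h0) / c by apply: sol cn _; lra.
    have e3 : s1 = - (b*s0) / c by apply: sol cn _; lra.
    have e4 : s2 = - (-a*s0) / c by apply: sol cn _; lra.
    rewrite e1 e2 e3 e4; split; [|split]; field; exact cn.
  have e1 : h0 = - (c*h1) / b by apply: sol bn _; lra.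
  have e2 : h2 = - (a*h1) / b by apply: sol bn _; lra.
  have e3 : s0 = - (c*s1) / b by apply: sol bn _; lra.
  have e4 : s2 = - (a*s1) / b by apply: sol bn _; lra.
  rewrite e1 e2 e3 e4; split; [|split]; field; exact bn.
have e1 : h0 = - (-c*h2) / a by apply: sol an _; lra.
have e2 : h1 = - (b*h2) / a by apply: sol an _; lra.
have e3 : s0 = - (-c*s2) / a by apply: sol an _; lra.
have e4 : s1 = - (b*s2) / a by apply: sol an _; lra.
rewrite e1 e2 e3 e4; split; [|split]; field; exact an.
Qed.

Lemma dir1 (R : realFieldType) (a b c h0 h1 h2 s0 s1 s2 : R) :
 a*s1 + b*s2 = 0 -> -a*s0 + c*s2 = 0 -> -b*s0 - c*s1 = 0 ->
 (a*h1 + b*h2) + (h0*(h0*s0+h1*s1+h2*s2) - (h0*h0+h1*h1+h2*h2)*s0) = 0 ->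
 (-a*h0 + c*h2) + (h1*(h0*s0+h1*s1+h2*s2) - (h0*h0+h1*h1+h2*h2)*s1) = 0 ->
 (-b*h0 - c*h1) + (h2*(h0*s0+h1*s1+h2*s2) - (h0*h0+h1*h1+h2*h2)*s2) = 0 ->
 a*h1 + b*h2 = 0 /\ -a*h0 + c*h2 = 0 /\ -b*h0 - c*h1 = 0.
Proof.
move=> P0 P1 P2 F0 F1 F2.
set w0 := a*h1 + b*h2; set w1 := -a*h0 + c*h2; set w2 := -b*h0 - c*h1.
have E : w0 ^+ 2 + w1 ^+ 2 + w2 ^+ 2 = 0.
  have -> : w0 ^+ 2 + w1 ^+ 2 + w2 ^+ 2 =
     w0 * ((a*h1 + b*h2) + (h0*(h0*s0+h1*s1+h2*s2) - (h0*h0+h1*h1+h2*h2)*s0))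
   + w1 * ((-a*h0 + c*h2) + (h1*(h0*s0+h1*s1+h2*s2) - (h0*h0+h1*h1+h2*h2)*s1))
   + w2 * ((-b*h0 - c*h1) + (h2*(h0*s0+h1*s1+h2*s2) - (h0*h0+h1*h1+h2*h2)*s2))
   - (h0*h0+h1*h1+h2*h2) * (h0 * (a*s1 + b*s2) + h1 * (-a*s0 + c*s2) + h2 * (-b*s0 - c*s1)).
    rewrite /w0 /w1 /w2; ring.
  by rewrite F0 F1 F2 P0 P1 P2; ring.
have q0 := sqr_ge0 w0; have q1 := sqr_ge0 w1; have q2 := sqr_ge0 w2.
have z0 : w0 ^+ 2 = 0 by lra.
have z1 : w1 ^+ 2 = 0 by lra.
have z2 : w2 ^+ 2 = 0 by lra.
by move: z0 z1 z2 => /eqP; rewrite expf_eq0 /= => /eqP -> /eqP; rewrite expf_eq0 /= => /eqP -> /eqP; rewrite expf_eq0 /= => /eqP ->.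
Qed.

Lemma key (R : realType) (M : 'M[R]_3) (h s : 'rV[R]_3) :
  (forall i j, M i j = - M j i) -> tapply M s = 0 -> M != 0 ->
  (tapply M h + tapply (\matrix_(i, j) (h 0 i * h 0 j
                  - (i == j)%:R * \sum_k (h 0 k * h 0 k))) s = 0 <-> tapply M h = 0).
Proof.
move=> sk /rowP Ps Mn0.
have d0 : forall i, M i i = 0.
  by move=> i; have := sk i i; move/eqP; rewrite -addr_eq0 -mulr2n mulrn_eq0 /=; move/eqP.
have Ps0 := Ps o0; have Ps1 := Ps o1; have Ps2 := Ps o2.
rewrite !mxE !sum3 !d0 in Ps0 Ps1 Ps2.
rewrite (sk o1 o0) (sk o2 o0) (sk o2 o1) in Ps0 Ps1 Ps2.
have Hne : ~ (M o0 o1 = 0 /\ M o0 o2 = 0 /\ M o1 o2 = 0).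
  move=> [e1 [e2 e3]]; apply: (negP Mn0); apply/eqP/matrixP => i j; rewrite mxE.
  have e1' : M o1 o0 = 0 by rewrite sk e1 oppr0.
  have e2' : M o2 o0 = 0 by rewrite sk e2 oppr0.
  have e3' : M o2 o1 = 0 by rewrite sk e3 oppr0.
  by case: (ord3P i) => [->|[->|->]]; case: (ord3P j) => [->|[->|->]]; rewrite ?d0.
have [Q0 [Q1 Q2]] : M o0 o1 * s 0 o1 + M o0 o2 * s 0 o2 = 0 /\
   - M o0 o1 * s 0 o0 + M o1 o2 * s 0 o2 = 0 /\
   - M o0 o2 * s 0 o0 - M o1 o2 * s 0 o1 = 0.
  by split; [|split]; [rewrite -Ps0|rewrite -Ps1|rewrite -Ps2]; ring.
split.
- move/rowP => F.
  have F0 := F o0; have F1 := F o1; have F2 := F o2.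
  rewrite !mxE !sum3 ?mxE ?sum3 !d0 /= in F0 F1 F2.
  rewrite (sk o1 o0) (sk o2 o0) (sk o2 o1) in F0 F1 F2.
  destruct (@dir1 _ (M o0 o1) (M o0 o2) (M o1 o2) (h 0 o0) (h 0 o1) (h 0 o2) (s 0 o0) (s 0 o1) (s 0 o2) Q0 Q1 Q2) as [W0 [W1 W2]];
    try (by apply: (etrans _ F0); ring); try (by apply: (etrans _ F1); ring); try (by apply: (etrans _ F2); ring).
  apply/rowP => i; rewrite !mxE sum3.
  case: (ord3P i) => [->|[->|->]]; rewrite !d0 ?(sk o1 o0) ?(sk o2 o0) ?(sk o2 o1).
  + by apply: (etrans _ W0); ring.
  + by apply: (etrans _ W1); ring.
  + by apply: (etrans _ W2); ring.
- move/rowP => W.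
  have W0 := W o0; have W1 := W o1; have W2 := W o2.
  rewrite !mxE !sum3 !d0 in W0 W1 W2.
  rewrite (sk o1 o0) (sk o2 o0) (sk o2 o1) in W0 W1 W2.
  destruct (@dir2 _ (M o0 o1) (M o0 o2) (M o1 o2) (h 0 o0) (h 0 o1) (h 0 o2) (s 0 o0) (s 0 o1) (s 0 o2) Hne)
    as [G0 [G1 G2]];
    try (by apply: (etrans _ W0); ring); try (by apply: (etrans _ W1); ring); try (by apply: (etrans _ W2); ring); try exact Q0; try exact Q1; try exact Q2.
  apply/rowP => i; rewrite !mxE !sum3 ?mxE ?sum3.
  case: (ord3P i) => [->|[->|->]]; rewrite !d0 ?(sk o1 o0) ?(sk o2 o0) ?(sk o2 o1) /=.
  + by apply: (etrans _ (etrans (congr2 +%R W0 G0) (addr0 0))); ring.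
  + by apply: (etrans _ (etrans (congr2 +%R W1 G1) (addr0 0))); ring.
  + by apply: (etrans _ (etrans (congr2 +%R W2 G2) (addr0 0))); ring.
Qed.

Theorem mainTheorem4 (R : realType) (P : 'rV[R]_3 -> 'M[R]_3)
  (H S : 'rV[R]_3 -> R) :
  poisson_tensor P -> smooth H -> smooth S ->
  (forall x, tapply (P x) (grad S x) = 0) ->
  forall x : 'rV[R]_3, P x != 0 ->
    (equilibrium (metriplectic_field P H S) x <->
     equilibrium (ham_field P H) x).
Proof.
move=> [_ sk _] _ _ PS x Pn0.
rewrite /equilibrium /metriplectic_field /ham_field /gtensor.
exact: key (sk x) (PS x) Pn0.
Qed.
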